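(* Let $n\ge1$, $m\ge1$, and let $I_m\subset S_m$ be a nonzero subspace spanned by an initial segment of degree-$m$ monomials with respect to the degree reverse lexicographic order (with $x_0\succ x_1\succ\cdots\succ x_n$). (1) For any $l>0$, $S_lI_m$ is spanned by an initial reverse lexicographic segment of degree-$(m+l)$ monomials if and only if $\dim_kI_m\ge\binom{n+m-1}{m}$, if and only if $x_{n-1}^m\in I_m$. (2) Suppose $x_{n-1}^m\in I_m$. Then for every $l\ge0$, $\dim_kS_m-\dim_kI_m=\dim_kS_{m+l}-\dim_kS_lI_m$. In particular, if $J\subset S$ is a homogeneous ideal generated in degrees $\le m$ with $J_m=I_m$, then the Hilbert polynomial of $S/J$ is constant.
   Context: $S=k[x_0,\dots,x_n]=\bigoplus_m S_m$ over an algebraically closed field $k$ of characteristic zero; $S_lI_m$ denotes the span of products $fg$, $f\in S_l$, $g\in I_m$. The degree reverse lexicographic order with $x_0\succ\cdots\succ x_n$: for monomials of the same degree, $x^\alpha\succ x^\beta$ iff the last nonzero entry of $\alpha-\beta$ is negative. An initial segment of degree $t$ is the set of the first $\ell$ monomials of degree $t$ in this order, for some $\ell$. *)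

(* Defs.v *)
From HB Require Import structures.
From mathcomp Require Import all_boot all_order all_algebra.
Set Implicit Arguments. Unset Strict Implicit. Unset Printing Implicit Defensive.
Import Order.TTheory GRing.Theory Num.Theory.
Local Open Scope ring_scope.

(* Monomials of degree t in the n+1 variables x_0, ..., x_n,
   represented by their exponent vectors. *)
Definition mon (n t : nat) :=
  {a : {ffun 'I_n.+1 -> 'I_t.+1} | (\sum_i (a i : nat))%N == t}.
HB.instance Definition _ n t := Finite.on (mon n t).

(* The degree-t homogeneous component S_t of S = k[x_0..x_n], identified
   with its coordinate space in the monomial basis. *)
Definition homog (k : fieldType) (n t : nat) := {ffun mon n t -> k^o}.

Definition xmon (k : fieldType) (n t : nat) (a : mon n t) : homog k n t :=
  [ffun b : mon n t => (if b == a then 1 else 0 : k^o)].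

(* Multiplication S_l x S_m -> S_t (it is zero unless t = l + m). *)
Definition mulh (k : fieldType) (n l m t : nat) (f : homog k n l) (g : homog k n m)
  : homog k n t :=
  [ffun c : mon n t => \sum_(a : mon n l) \sum_(b : mon n m |
       [forall i, ((val a i : nat) + val b i == val c i)%N]) (f a * g b : k^o)].

Definition SmulI (k : fieldType) (n l m t : nat) (I : {vspace homog k n m})
  : {vspace homog k n t} :=
  <<[seq mulh t f g | f <- (vbasis (fullv : {vspace homog k n l}) : seq _),
                      g <- (vbasis I : seq _)]>>%VS.

Definition revlex_gt (n t : nat) (a b : mon n t) : bool :=
  [exists i : 'I_n.+1, ((val a i : nat) < val b i)%N &&
     [forall j : 'I_n.+1, (i < j)%N ==> ((val a j : nat) == val b j)]].

Definition revlex_rank (n t : nat) (a : mon n t) : nat :=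
  #|[set b : mon n t | revlex_gt b a]|.

Definition mons (n t : nat) : seq (mon n t) := enum {: mon n t}.

Definition initial_segment (k : fieldType) (n t : nat) (V : {vspace homog k n t}) :=
  exists l : nat,
    V = <<[seq xmon k a | a <- mons n t &
            (revlex_rank a < l)%N]>>%VS.

Definition pure_exp (n m : nat) (j : 'I_n.+1) : {ffun 'I_n.+1 -> 'I_m.+1} :=
  [ffun i => if i == j then ord_max else ord0].

Lemma pure_exp_deg (n m : nat) (j : 'I_n.+1) :
  (\sum_i (pure_exp m j i : nat))%N == m.
Proof.
rewrite (bigD1 j) //= big1 => [|i /negbTE Hi]; rewrite /pure_exp ffunE.
  by rewrite eqxx addn0.
by rewrite Hi.
Qed.

Definition pure_mon (n m : nat) (j : 'I_n.+1) : mon n m :=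
  exist _ (pure_exp m j) (pure_exp_deg m j).

(* Main.v *)
Require Import Defs.
From HB Require Import structures.
From mathcomp Require Import all_boot all_order all_algebra all_field.
From mathcomp Require Import zify.
Import Order.TTheory GRing.Theory Num.Theory.
Set Implicit Arguments. Unset Strict Implicit. Unset Printing Implicit Defensive.
Local Open Scope ring_scope.
Section Mon.
Variable n : nat.

Definition ev t (a : mon n t) (i : 'I_n.+1) : nat := val a i.

Lemma ev_sum t (a : mon n t) : (\sum_i ev a i)%N = t.
Proof. exact/eqP/(valP a). Qed.

Lemma ev_inj t (a b : mon n t) : (forall i, ev a i = ev b i) -> a = b.
Proof. by move=> H; apply/val_inj/ffunP => i; apply/val_inj; exact: H. Qed.

Lemma ev_le t (a : mon n t) i : (ev a i <= t)%N.
Proof. by rewrite -[X in (_ <= X)%N](ev_sum a) (bigD1 i) //= leq_addr. Qed.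

Definition mon0 t : mon n t := pure_mon t ord0.

Definition mkmon t (f : 'I_n.+1 -> nat) : mon n t :=
  insubd (mon0 t) [ffun i => inord (f i) : 'I_t.+1].

Lemma mkmonE t f : (\sum_i f i)%N = t -> forall i, ev (mkmon t f) i = f i.
Proof.
move=> Hs i.
have Hle j : (f j <= t)%N by rewrite -Hs (bigD1 j) //= leq_addr.
rewrite /ev /mkmon val_insubd.
have -> : (\sum_i ([ffun i => inord (f i) : 'I_t.+1] i : nat))%N == t.
  apply/eqP; rewrite -[in RHS]Hs; apply: eq_bigr => j _; rewrite ffunE inordK //; exact: Hle.
by rewrite ffunE inordK //; exact: Hle.
Qed.

Definition gtv (u v : 'I_n.+1 -> nat) :=
  [exists i, (u i < v i)%N && [forall j : 'I_n.+1, (i < j)%N ==> (u j == v j)]].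

Lemma revlexE t (a b : mon n t) : revlex_gt a b = gtv (ev a) (ev b).
Proof. by []. Qed.

Lemma gtv_irr (u : 'I_n.+1 -> nat) : ~~ gtv u u.
Proof. by apply/existsP => -[i /andP[]]; rewrite ltnn. Qed.

Lemma gtvP (u v : 'I_n.+1 -> nat) : reflect (exists i : 'I_n.+1, (u i < v i)%N /\ forall j : 'I_n.+1, (i < j)%N -> u j = v j) (gtv u v).
Proof.
apply: (iffP existsP) => [[i /andP[H1 /forallP H2]]|[i [H1 H2]]].
  by exists i; split => // j Hj; apply/eqP; move: (H2 j); rewrite Hj.
by exists i; rewrite H1 /=; apply/forallP => j; apply/implyP => /H2 ->.
Qed.

Lemma gtv_trans (u v w : 'I_n.+1 -> nat) : gtv u v -> gtv v w -> gtv u w.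
Proof.
move=> /gtvP [i [H1 H2]] /gtvP [j [H3 H4]]; apply/gtvP.
have [ij|ji|ij] := ltngtP i j.
- exists j; split; first by rewrite H2.
  by move=> x Hx; rewrite H2 ?H4 //; apply: ltn_trans Hx.
- exists i; split; first by rewrite -H4.
  by move=> x Hx; rewrite H2 ?H4 //; apply: ltn_trans Hx.
- have e : i = j by apply: val_inj.
  subst j; exists i; split; first by apply: ltn_trans H3.
  by move=> x Hx; rewrite H2 ?H4.
Qed.

Lemma gtv_total (u v : 'I_n.+1 -> nat) : (exists i, u i != v i) -> gtv u v || gtv v u.
Proof.
case=> i0 Hi0.
case: (@arg_maxnP _ i0 (fun i => u i != v i) (fun i => nat_of_ord i) Hi0).
move=> i Hi Hmax.
have Heq (j : 'I_n.+1) : (i < j)%N -> u j = v j.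
  move=> Hj; apply/eqP; apply: contraTT Hj => Hne.
  by rewrite -leqNgt; apply: Hmax.
have [H|H|H] := ltngtP (u i) (v i).
- by apply/orP; left; apply/gtvP; exists i.
- by apply/orP; right; apply/gtvP; exists i; split=> // j /Heq ->.
- by rewrite H eqxx in Hi.
Qed.

Lemma gtv_shift (u v u' v' w : 'I_n.+1 -> nat) :
  (forall i, u i + w i = u' i)%N -> (forall i, v i + w i = v' i)%N ->
  gtv u' v' = gtv u v.
Proof.
move=> Hu Hv; apply/gtvP/gtvP => -[i [H1 H2]]; exists i; split.
- by move: H1; rewrite -Hu -Hv ltn_add2r.
- by move=> j /H2; rewrite -Hu -Hv => /addIn.
- by rewrite -Hu -Hv ltn_add2r.
- by move=> j /H2; rewrite -Hu -Hv => ->.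
Qed.

Lemma split_le (f : 'I_n.+1 -> nat) r : (r <= \sum_i f i)%N ->
  exists h : 'I_n.+1 -> nat, (forall i, h i <= f i)%N /\ (\sum_i h i)%N = r.
Proof.
elim: r => [|r IH] Hr.
  by exists (fun _ => 0%N); split => //; rewrite big1.
have [h [Hh1 Hh2]] := IH (ltnW Hr).
have [i Hi] : exists i, (h i < f i)%N.
  apply/existsP; apply: contraTT Hr; rewrite negb_exists => /forallP H.
  have e : (\sum_i f i = \sum_i h i)%N.
    by apply: eq_bigr => i _; apply/eqP; rewrite eqn_leq Hh1 leqNgt H.
  by rewrite e Hh2 ltnn.
exists (fun j => h j + (j == i))%N; split.
  by move=> j; case: eqP => [->|_]; rewrite ?addn1 ?addn0.
rewrite big_split /= Hh2 (bigD1 i) //= eqxx big1 ?addn0 ?addn1 // => j /negbTE -> //.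
Qed.

End Mon.
Lemma count_enumT (T : finType) (p : pred T) : count p (enum {: T}) = #|p|.
Proof. by rewrite enumT cardE /enum_mem size_filter. Qed.

Section Span.
Variables (k : fieldType) (n t : nat).
Local Notation H := (homog k n t).

Definition Mp (p : pred (mon n t)) : {vspace H} :=
  <<[seq xmon k a | a <- mons n t & p a]>>%VS.

Lemma xmonE (a b : mon n t) : xmon k a b = if b == a then 1 else 0.
Proof. by rewrite ffunE. Qed.

Lemma homog_decomp (f : H) : f = \sum_a f a *: xmon k a.
Proof.
apply/ffunP => c; rewrite sum_ffunE (bigD1 c) //= big1 => [|a /negbTE Ha].
  by rewrite !ffunE eqxx addr0 /GRing.scale /= mulr1.
by rewrite !ffunE eq_sym Ha /GRing.scale /= mulr0.
Qed.

Lemma memMp p (f : H) : (f \in Mp p) = [forall b, ~~ p b ==> (f b == 0)].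
Proof.
apply/idP/forallP => [Hf b|Hf].
  apply/implyP => Hb.
  have := coord_span (X := in_tuple [seq xmon k a | a <- mons n t & p a]) Hf.
  move=> ->; rewrite sum_ffunE big1 // => i _.
  have : (in_tuple [seq xmon k a | a <- mons n t & p a])`_i \in
           [seq xmon k a | a <- mons n t & p a].
    by apply: mem_nth; exact: ltn_ord.
  case/mapP => a; rewrite mem_filter => /andP[Ha _] ->.
  rewrite ffunE ffunE; case: eqP => [e|_]; last by rewrite /GRing.scale /= mulr0.
  by move: Hb; rewrite e Ha.
rewrite [f]homog_decomp; apply: rpred_sum => a _.
case Ha: (p a).
  apply: rpredZ; apply: memv_span; apply: map_f.
  by rewrite mem_filter Ha /mons mem_enum.
by move/implyP: (Hf a); rewrite Ha => /(_ isT) /eqP ->; rewrite scale0r rpred0.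
Qed.

Lemma xmon_Mp p a : (xmon k a \in Mp p) = p a.
Proof.
rewrite memMp; apply/forallP/idP => [H0|Ha b].
  apply: contraT => Ha; move/implyP: (H0 a) => /(_ Ha).
  by rewrite xmonE eqxx oner_eq0.
apply/implyP => Hb; rewrite xmonE; have [e|ne] := eqVneq b a; last by rewrite eqxx.
by move: Hb; rewrite e Ha.
Qed.

Lemma Mp_inj p q : Mp p = Mp q -> p =1 q.
Proof. by move=> e a; rewrite -!xmon_Mp e. Qed.

Lemma Mp_eq p q : p =1 q -> Mp p = Mp q.
Proof. by move=> e; rewrite /Mp (eq_filter e). Qed.

Lemma dim_Mp p : \dim (Mp p) = #|p|.
Proof.
set s := [seq a <- mons n t | p a].
have Hu : uniq s by rewrite filter_uniq // /mons enum_uniq.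
have Hfree : free (in_tuple [seq xmon k a | a <- s]).
  apply/freeP => c Hc i.
  have Hi : (i < size s)%N by rewrite -(size_map (fun a => xmon k a)) ltn_ord.
  have := congr1 (fun f : H => f (nth (mon0 n t) s i)) Hc.
  rewrite sum_ffunE ffunE (bigD1 i) //= big1 => [|j Hj].
    rewrite (nth_map (mon0 n t)) // !ffunE eqxx /GRing.scale /= mulr1 addr0.
    by [].
  have Hj' : (j < size s)%N by rewrite -(size_map (fun a => xmon k a)) ltn_ord.
  rewrite (nth_map (mon0 n t)) // !ffunE nth_uniq //.
  by rewrite (inj_eq val_inj) eq_sym (negbTE Hj) /GRing.scale /= mulr0.
have := size_basis (X := in_tuple [seq xmon k a | a <- s]) (U := Mp p).
rewrite /basis_of Hfree eqxx andbT => /(_ isT) ->.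
by rewrite size_map size_filter count_enumT.
Qed.

Lemma Mp_full : (fullv : {vspace H}) = Mp predT.
Proof.
apply/eqP; rewrite eqEsubv subvf andbT; apply/subvP => f _.
by rewrite memMp; apply/forallP.
Qed.

Lemma dim_full : \dim (fullv : {vspace H}) = #|{: mon n t}|.
Proof. by rewrite Mp_full dim_Mp; apply: eq_card. Qed.

End Span.
Section Mul.
Variables (k : fieldType) (n l m t : nat).

Lemma mulh0l (g : homog k n m) : mulh t (0 : homog k n l) g = 0.
Proof.
apply/ffunP => c; rewrite !ffunE big1 // => a _; rewrite big1 // => b _.
by rewrite ffunE mul0r.
Qed.

Lemma mulhDl (f1 f2 : homog k n l) (g : homog k n m) :
  mulh t (f1 + f2) g = mulh t f1 g + mulh t f2 g.
Proof.
apply/ffunP => c; rewrite !ffunE -big_split; apply: eq_bigr => a _.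
rewrite -big_split; apply: eq_bigr => b _; by rewrite ffunE mulrDl.
Qed.

Lemma mulhZl (x : k) (f : homog k n l) (g : homog k n m) :
  mulh t (x *: f) g = x *: mulh t f g.
Proof.
apply/ffunP => c; rewrite !ffunE /GRing.scale /= mulr_sumr; apply: eq_bigr => a _.
rewrite mulr_sumr; apply: eq_bigr => b _; by rewrite ffunE mulrA.
Qed.

Lemma mulh0r (f : homog k n l) : mulh t f (0 : homog k n m) = 0.
Proof.
apply/ffunP => c; rewrite !ffunE big1 // => a _; rewrite big1 // => b _.
by rewrite ffunE mulr0.
Qed.

Lemma mulhDr (f : homog k n l) (g1 g2 : homog k n m) :
  mulh t f (g1 + g2) = mulh t f g1 + mulh t f g2.
Proof.
apply/ffunP => c; rewrite !ffunE -big_split; apply: eq_bigr => a _.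
rewrite -big_split; apply: eq_bigr => b _; by rewrite ffunE mulrDr.
Qed.

Lemma mulhZr (x : k) (f : homog k n l) (g : homog k n m) :
  mulh t f (x *: g) = x *: mulh t f g.
Proof.
apply/ffunP => c; rewrite !ffunE /GRing.scale /= mulr_sumr; apply: eq_bigr => a _.
rewrite mulr_sumr; apply: eq_bigr => b _; rewrite ffunE /GRing.scale /=.
by rewrite mulrA [f a * x]mulrC -mulrA.
Qed.

Lemma mulh_suml (I : Type) (r : seq I) (P : pred I) (F : I -> homog k n l) (g : homog k n m) :
  mulh t (\sum_(i <- r | P i) F i) g = \sum_(i <- r | P i) mulh t (F i) g.
Proof.
elim: r => [|x r IH]; first by rewrite !big_nil mulh0l.
by rewrite !big_cons; case: (P x); rewrite ?mulhDl IH.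
Qed.

Lemma mulh_sumr (I : Type) (r : seq I) (P : pred I) (f : homog k n l) (F : I -> homog k n m) :
  mulh t f (\sum_(i <- r | P i) F i) = \sum_(i <- r | P i) mulh t f (F i).
Proof.
elim: r => [|x r IH]; first by rewrite !big_nil mulh0r.
by rewrite !big_cons; case: (P x); rewrite ?mulhDr IH.
Qed.

Lemma mulh_span (s1 : seq (homog k n l)) (s2 : seq (homog k n m)) (f : homog k n l) (g : homog k n m) :
  f \in <<s1>>%VS -> g \in <<s2>>%VS ->
  mulh t f g \in <<[seq mulh t x y | x <- s1, y <- s2]>>%VS.
Proof.
move=> /(coord_span (X := in_tuple s1)) -> /(coord_span (X := in_tuple s2)) ->.
rewrite mulh_suml; apply: rpred_sum => i _; rewrite mulhZl; apply: rpredZ.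
rewrite mulh_sumr; apply: rpred_sum => j _; rewrite mulhZr; apply: rpredZ.
apply: memv_span; apply/allpairsP; exists (s1`_i, s2`_j); split => //;
  apply: mem_nth; exact: ltn_ord.
Qed.

Lemma mulh_xmonl (a : mon n l) (g : homog k n m) (c : mon n t) :
  mulh t (xmon k a) g c =
  \sum_(b | [forall i, (ev a i + ev b i == ev c i)%N]) g b.
Proof.
rewrite ffunE (bigD1 a) //= [X in _ + X]big1 => [|a' Ha'].
  by rewrite addr0; apply: eq_bigr => b _; rewrite xmonE eqxx mul1r.
by apply: big1 => b _; rewrite xmonE (negbTE Ha') mul0r.
Qed.

Lemma mulh_xmonl_eq (a : mon n l) (g : homog k n m) (c : mon n t) b0 :
  (forall i, ev a i + ev b0 i = ev c i)%N -> mulh t (xmon k a) g c = g b0.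
Proof.
move=> H0; rewrite mulh_xmonl (bigD1 b0) /=; last by apply/forallP => i; rewrite H0.
rewrite big1 ?addr0 // => b /andP [/forallP Hb Hne].
suff e : b = b0 by rewrite e eqxx in Hne.
apply: ev_inj => i; move: (Hb i) (H0 i) => /eqP; lia.
Qed.

Lemma mulh_supp (f : homog k n l) (g : homog k n m) (c : mon n t) :
  mulh t f g c != 0 ->
  exists (a : mon n l) (b : mon n m), (forall i, ev a i + ev b i = ev c i)%N /\ g b != 0.
Proof.
move=> H.
case: (pickP (fun ab : mon n l * mon n m =>
   [forall i, ev (t:=l) ab.1 i + ev (t:=m) ab.2 i == ev c i]%N && (g ab.2 != 0))).
  move=> [a b] /andP [/forallP Hab Hg]; exists a, b; split => // i.
  exact/eqP/Hab.
move=> H0; move: H; rewrite ffunE big1 ?eqxx // => a _.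
apply: big1 => b Hb; have := H0 (a, b); rewrite /= Hb /= => /negbFE /eqP ->.
by rewrite mulr0.
Qed.

Lemma mulh_xmon (a : mon n l) (b : mon n m) (c : mon n t) :
  (forall i, ev a i + ev b i = ev c i)%N -> mulh t (xmon k a) (xmon k b) = xmon k c.
Proof.
move=> Habc; apply/ffunP => c'.
have [e|ne] := eqVneq c' c.
  by rewrite e (mulh_xmonl_eq _ Habc) !xmonE !eqxx.
rewrite mulh_xmonl [RHS]xmonE (negbTE ne) big1 // => b' /forallP Hb'.
rewrite xmonE; have [e|//] := eqVneq b' b.
suff : c' = c by move=> e'; rewrite e' eqxx in ne.
apply: ev_inj => i; move: (Hb' i) (Habc i); rewrite e => /eqP; lia.
Qed.

Definition Qp (p : pred (mon n m)) : pred (mon n t) := fun c =>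
  [exists a : mon n l, exists b : mon n m,
     p b && [forall i, ev a i + ev b i == ev c i]%N].

Lemma SmulI_Mp p : SmulI l t (Mp k p) = Mp k (Qp p).
Proof.
apply/eqP; rewrite eqEsubv; apply/andP; split.
  apply/span_subvP => x /allpairsP [[f g] [_ Hg ->]] /=.
  rewrite memMp; apply/forallP => c; apply/implyP => Hc.
  apply: contraNT Hc => Hne.
  have [a [b [Hab Hgb]]] := mulh_supp Hne.
  have Hg' := vbasis_mem Hg; rewrite memMp in Hg'.
  have Hpb : p b.
    apply: contraNT Hgb => Hpb; exact: (implyP (forallP Hg' b) Hpb).
  apply/existsP; exists a; apply/existsP; exists b; rewrite Hpb /=.
  by apply/forallP => i; apply/eqP; exact: Hab.
apply/span_subvP => x /mapP [c]; rewrite mem_filter => /andP [Hc _] ->.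
case/existsP: Hc => a /existsP [b /andP [Hpb /forallP Hab]].
rewrite -(@mulh_xmon a b); last by move=> i; apply/eqP.
apply: mulh_span.
  by rewrite (span_basis (vbasisP _)) memvf.
by rewrite (span_basis (vbasisP _)) xmon_Mp.
Qed.

End Mul.
Lemma sum_count_lt N (s : seq nat) : all (fun x => x < N)%N s ->
  (\sum_(i < N) count_mem (i : nat) s)%N = size s.
Proof.
elim: s => [|x s IH] /=; first by rewrite big1.
case/andP => Hx Hs; rewrite big_split /= IH // (bigD1 (Ordinal Hx)) //= eqxx.
rewrite big1 ?add1n ?addn0 // => i Hi.
have -> // : (x == i) = false.
apply/negbTE; apply: contra Hi => /eqP e; apply/eqP/val_inj => /=.
by rewrite e.
Qed.

Section Card.
Variables (n' m : nat).
Local Notation N := n'.+1.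

Definition phi (t : m.-tuple 'I_N) : mon N m :=
  mkmon m (fun i => count_mem (i : nat) (map val t)).


Lemma ev_phi t i : ev (phi t) i = count_mem (i : nat) (map val t).
Proof.
rewrite mkmonE // sum_count_lt ?size_map ?size_tuple //.
by apply/allP => x /mapP [y _ ->]; exact: leqW (ltn_ord y).
Qed.

Lemma notin_big (t : m.-tuple 'I_N) x : (N <= x)%N -> count_mem x (map val t) = 0%N.
Proof.
move=> Hx; apply/count_memPn; apply/negP => /mapP [y _ e].
by move: (ltn_ord y); rewrite -e ltnNge Hx.
Qed.

Definition Sset := [set t : m.-tuple 'I_N | sorted leq (map val t)].

Lemma phi_inj : {in Sset &, injective phi}.
Proof.
move=> t1 t2; rewrite !inE => s1 s2 e.
apply/val_inj/(inj_map val_inj)/(sorted_eq leq_trans anti_leq s1 s2).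
apply/allP => x _ /=.
have [Hx|Hx] := ltnP x N.+1.
  by have := congr1 (fun c => ev c (Ordinal Hx)) e; rewrite !ev_phi /= => ->.
by rewrite !notin_big // ltnW.
Qed.

Lemma phi_X t : ev (phi t) ord_max = 0%N.
Proof. by rewrite ev_phi notin_big. Qed.

Lemma X_phi (a : mon N m) : ev a ord_max = 0%N -> exists2 t, t \in Sset & a = phi t.
Proof.
move=> Ha.
pose f (x : 'I_N) := ev a (widen_ord (leqnSn N) x).
pose s0 := flatten [seq nseq (f x) x | x <- enum 'I_N].
have Hc0 (x : 'I_N) : count_mem x s0 = f x.
  rewrite count_flatten sumnE !big_map (bigD1 x) //= count_nseq /= eqxx mul1n.
  rewrite big1 ?addn0 // => y Hy.
  by rewrite count_nseq /= (negbTE Hy).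
have Hsz : size s0 = m.
  rewrite size_flatten /shape sumnE !big_map.
  have := ev_sum a; rewrite big_ord_recr /= Ha addn0 => <-.
  by apply: eq_bigr => x _; rewrite size_nseq.
pose s := sort (relpre val leq) s0.
have Hs : size s == m by rewrite size_sort Hsz.
exists (Tuple Hs).
  rewrite inE /= sorted_map; apply: sort_sorted => x y; exact: leq_total.
apply: ev_inj => i; rewrite ev_phi /= count_map.
have -> : count (preim val (pred1 (i : nat))) s = count (preim val (pred1 (i : nat))) s0.
  by apply/permP; rewrite perm_sort.
have [Hi|Hi] := ltnP i N.
  rewrite (eq_count (a2 := pred1 (Ordinal Hi))); last first.
    by move=> x /=; rewrite -(inj_eq val_inj).
  rewrite Hc0 /f; congr ev; exact: val_inj.
have -> : i = ord_max by apply: val_inj => /=; move: (ltn_ord i); lia.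
rewrite Ha; apply/esym/eqP; rewrite -leqn0 leqNgt -has_count; apply/hasPn => x _ /=.
by rewrite neq_ltn ltn_ord.
Qed.

Lemma card_X' : #|[pred c : mon N m | ev c ord_max == 0%N]| = 'C(m + n', m).
Proof.
rewrite -card_sorted_tuples -(card_in_imset phi_inj); apply: eq_card => c.
rewrite !inE; apply/idP/imsetP.
  by move/eqP => /X_phi [t Ht ->]; exists t.
by case=> t _ ->; rewrite phi_X.
Qed.

End Card.
Section Seg.
Variables (n t : nat).

Definition dc (p : pred (mon n t)) := forall a b, p b -> revlex_gt a b -> p a.

Lemma revlex_irr (a : mon n t) : ~~ revlex_gt a a.
Proof. exact: gtv_irr. Qed.

Lemma revlex_trans (a b c : mon n t) : revlex_gt a b -> revlex_gt b c -> revlex_gt a c.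
Proof. exact: gtv_trans. Qed.

Lemma revlex_total (a b : mon n t) : a != b -> revlex_gt a b || revlex_gt b a.
Proof.
move=> Hne; apply: gtv_total.
case: (pickP (fun i => ev a i != ev b i)) => [i Hi|H0]; first by exists i.
by case/eqP: Hne; apply: ev_inj => i; apply/eqP; move: (H0 i) => /negbFE.
Qed.

Lemma dc_rank L : dc (fun a => (revlex_rank a < L)%N).
Proof.
move=> a b Hb Hab; apply: (ltn_trans _ Hb); rewrite /revlex_rank.
apply: proper_card; apply/properP; split.
  by apply/subsetP => c; rewrite !inE => Hca; exact: revlex_trans Hca Hab.
by exists a; rewrite !inE ?Hab // revlex_irr.
Qed.

Lemma dc_seg p : dc p -> p =1 (fun a => (revlex_rank a < #|p|)%N).
Proof.
move=> Hp a; apply/idP/idP => [Ha|].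
  rewrite /revlex_rank (cardD1 a p) [a \in p]Ha add1n ltnS.
  apply: subset_leq_card; apply/subsetP => c; rewrite !inE => Hc.
  have -> : c \in p by exact: Hp Ha Hc.
  rewrite andbT; apply: contraTneq Hc => ->; exact: revlex_irr.
apply: contraTT => Ha; rewrite -leqNgt /revlex_rank.
apply: subset_leq_card; apply/subsetP => c Hc; rewrite inE.
have Hca : c != a by apply: contraNneq Ha => <-.
case/orP: (revlex_total Hca) => // Hac.
by move: Ha; rewrite (Hp _ _ Hc Hac).
Qed.

Lemma seg_iff (k : fieldType) (V : {vspace homog k n t}) :
  initial_segment V <-> exists p, dc p /\ V = Mp k p.
Proof.
split.
  by case=> L ->; exists (fun a => (revlex_rank a < L)%N); split; [exact: dc_rank|].
case=> p [Hp ->]; exists #|p|; exact: Mp_eq (dc_seg Hp).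
Qed.

End Seg.

Lemma ev_pure n m (j i : 'I_n.+1) : ev (pure_mon m j) i = if i == j then m else 0%N.
Proof. by rewrite /ev /= ffunE; case: eqP. Qed.

Lemma card_Xg n m : (0 < n)%N ->
  #|[pred c : mon n m | ev c ord_max == 0%N]| = 'C(n + m - 1, m).
Proof.
case: n => [//|n'] _; rewrite card_X'; congr binomial; lia.
Qed.

Section Xn.
Variables (n m : nat).
Hypothesis Hn : (0 < n)%N.

Definition xi : 'I_n.+1 := inord n.-1.
Definition xn : mon n m := pure_mon m xi.

Lemma xi_val : (xi : nat) = n.-1.
Proof. by rewrite inordK // ltnS leq_pred. Qed.

Lemma xi_max : (xi < @ord_max n)%N.
Proof. by rewrite xi_val /=; case: n Hn. Qed.

Lemma xi_neq_max : xi != ord_max.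
Proof. by rewrite -(inj_eq val_inj) neq_ltn xi_max. Qed.

Lemma max_neq_xi : (@ord_max n == xi) = false.
Proof. by apply/negbTE; rewrite eq_sym xi_neq_max. Qed.

Lemma after_xi (j : 'I_n.+1) : (xi < j)%N -> j = ord_max.
Proof.
move=> H; apply: val_inj => /=; move: H (ltn_ord j); rewrite xi_val; lia.
Qed.

Definition Xp (c : mon n m) := ev c ord_max == 0%N.

Lemma X_iff c : Xp c = (c == xn) || revlex_gt c xn.
Proof.
apply/idP/idP => [Hc|].
  have [->|Hne] := eqVneq c xn; first by [].
  apply/orP; right; rewrite revlexE; apply/gtvP; exists xi; split.
    rewrite ev_pure eqxx ltn_neqAle ev_le andbT.
    apply: contra Hne => /eqP Hm; apply/eqP/ev_inj => i.
    rewrite ev_pure; case: eqP => [->//|/eqP Hi].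
    have := ev_sum c; rewrite (bigD1 xi) //= Hm => /eqP.
    rewrite -[X in _ == X]addn0 eqn_add2l sum_nat_eq0 => /forallP /(_ i).
    by rewrite Hi => /eqP.
  move=> j /after_xi ->; rewrite ev_pure max_neq_xi.
  exact/eqP.
case/orP => [/eqP ->|].
  by rewrite /Xp ev_pure max_neq_xi.
rewrite revlexE => /gtvP [i [H1 H2]].
have Hi : i = xi by move: H1; rewrite ev_pure; case: eqP.
rewrite /Xp H2; last by rewrite Hi xi_max.
by rewrite ev_pure max_neq_xi.
Qed.

Lemma inXp c : (c \in Xp) = Xp c.
Proof. by []. Qed.

Lemma card_X : #|Xp| = 'C(n + m - 1, m).
Proof. exact: card_Xg. Qed.

Lemma dc_xn p : dc p -> p xn = ('C(n + m - 1, m) <= #|p|)%N.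
Proof.
move=> Hp; rewrite -card_X; apply/idP/idP => [Hx|].
  apply: subset_leq_card; apply/subsetP => c; rewrite inXp X_iff.
  by case/orP => [/eqP ->//|Hc]; exact: Hp Hc.
apply: contraTT => Hx; rewrite -ltnNge.
apply: (@leq_ltn_trans #|[predD1 Xp & xn]|).
  apply: subset_leq_card; apply/subsetP => c Hc; rewrite !inE.
  have Hcx : c != xn by apply: contraNneq Hx => <-.
  rewrite Hcx /= inXp X_iff; case/orP: (revlex_total Hcx) => [->|Hxc]; first by rewrite orbT.
  by move: Hx; rewrite (Hp _ _ Hc Hxc).
have Hxx : xn \in Xp by rewrite inXp X_iff eqxx.
by rewrite [X in (_ < X)%N](cardD1 xn) Hxx add1n.
Qed.

End Xn.
Lemma sum_subn (I : finType) (f d : I -> nat) :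
  (forall i, d i <= f i)%N -> (\sum_i (f i - d i) = \sum_i f i - \sum_i d i)%N.
Proof.
move=> H; apply/eqP; rewrite -(eqn_add2r (\sum_i d i)) subnK; last exact: leq_sum.
by rewrite -big_split /=; apply/eqP/eq_bigr => i _; rewrite subnK.
Qed.

Lemma sum_maxl n l : (\sum_(i : 'I_n.+1) (if i == ord_max then l else 0) = l)%N.
Proof. by rewrite (bigD1 ord_max) //= eqxx big1 ?addn0 // => i /negbTE ->. Qed.

Section Shift.
Variables (n m l : nat).

Definition dl (i : 'I_n.+1) : nat := if i == ord_max then l else 0%N.

Definition sh (b : mon n m) : mon n (m + l) := mkmon (m + l) (fun i => ev b i + dl i)%N.
Definition ush (c : mon n (m + l)) : mon n m := mkmon m (fun i => ev c i - dl i)%N.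

Lemma ev_sh b i : ev (sh b) i = (ev b i + dl i)%N.
Proof. by rewrite mkmonE // big_split /= ev_sum sum_maxl. Qed.

Lemma dl_le c i : (l <= ev c ord_max)%N -> (dl i <= ev (t := m + l) c i)%N.
Proof. by rewrite /dl; case: eqP => [->|]. Qed.

Lemma ev_ush c i : (l <= ev c ord_max)%N -> ev (ush c) i = (ev c i - dl i)%N.
Proof.
move=> Hc; rewrite mkmonE // sum_subn; last by move=> j; exact: dl_le.
by rewrite ev_sum sum_maxl addnK.
Qed.

Lemma ushK b : ush (sh b) = b.
Proof.
have Hl : (l <= ev (sh b) ord_max)%N by rewrite ev_sh /dl eqxx leq_addl.
by apply: ev_inj => i; rewrite ev_ush // ev_sh addnK.
Qed.

Lemma shK c : (l <= ev c ord_max)%N -> sh (ush c) = c.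
Proof. by move=> Hc; apply: ev_inj => i; rewrite ev_sh ev_ush // subnK // dl_le. Qed.

Lemma ev_pl (i : 'I_n.+1) : ev (pure_mon l ord_max) i = dl i.
Proof. by rewrite ev_pure. Qed.

End Shift.

Section Main.
Variables (n m l : nat).
Hypothesis Hn : (0 < n)%N.
Variable p : pred (mon n m).
Hypothesis Hdc : dc p.

Local Notation Q := (@Qp n l m (m + l) p).

Lemma Q_sh_of b : p b -> Q (sh l b).
Proof.
move=> Hb; apply/existsP; exists (pure_mon l ord_max); apply/existsP; exists b.
by rewrite Hb /=; apply/forallP => i; rewrite ev_pl ev_sh addnC.
Qed.

Section WithXn.
Hypothesis Hxn : p (xn n m).

Lemma X_sub c : Xp c -> p c.
Proof. by rewrite X_iff // => /orP [/eqP ->|]; [|exact: Hdc]. Qed.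

Lemma Q_small c : (ev c ord_max < l)%N -> Q c.
Proof.
move=> Hc.
pose g (i : 'I_n.+1) := if i == ord_max then 0%N else ev c i.
have Hg : (m <= \sum_i g i)%N.
  have := ev_sum c; rewrite (bigD1 ord_max) //= => Hs.
  rewrite (bigD1 ord_max) //= /g eqxx add0n.
  rewrite (eq_bigr (fun i => ev c i)); last by move=> i /negbTE ->.
  lia.
have [h [Hh1 Hh2]] := split_le Hg.
have Hh3 i : (h i <= ev c i)%N.
  by apply: leq_trans (Hh1 i) _; rewrite /g; case: eqP.
apply/existsP; exists (mkmon l (fun i => ev c i - h i)%N).
apply/existsP; exists (mkmon m h).
have Hsa : (\sum_i (ev c i - h i) = l)%N by rewrite sum_subn // ev_sum Hh2 addKn.
apply/andP; split.
  apply: X_sub; rewrite /Xp mkmonE //; apply/eqP.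
  by move: (Hh1 ord_max); rewrite /g eqxx leqn0 => /eqP.
by apply/forallP => i; rewrite !mkmonE // subnK.
Qed.

Lemma Q_big c : (l <= ev c ord_max)%N -> Q c = p (ush c).
Proof.
move=> Hc; apply/idP/idP => [|Hp]; last by rewrite -(shK Hc); exact: Q_sh_of.
case/existsP => a /existsP [b /andP [Hb /forallP Hab]].
have Hab' i : (ev a i + ev b i = ev c i)%N by apply/eqP/Hab.
have Han : (ev a ord_max <= l)%N by apply: ev_le.
have [Hlt|Heq] := ltnP (ev a ord_max) l.
  apply: (Hdc Hb); rewrite revlexE; apply/gtvP; exists ord_max; split.
    rewrite ev_ush // /dl eqxx; move: (Hab' ord_max) Hc Hlt; lia.
  by move=> j; rewrite ltnNge -ltnS ltn_ord.
have Ha0 i : i != ord_max -> ev a i = 0%N.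
  move=> Hi; have := ev_sum a; rewrite (bigD1 ord_max) //= => /eqP.
  rewrite -[X in _ == X]addn0.
  have -> : ev a ord_max = l by apply/eqP; rewrite eqn_leq Han Heq.
  rewrite eqn_add2l sum_nat_eq0 => /forallP /(_ i); rewrite Hi => /eqP.
  by [].
suff -> : ush c = b by [].
apply: ev_inj => i; rewrite ev_ush // /dl -(Hab' i).
case: eqP => [->|/eqP Hi].
  have -> : ev a ord_max = l by apply/eqP; rewrite eqn_leq Han Heq.
  by rewrite addKn.
by rewrite Ha0 // add0n subn0.
Qed.

Lemma dc_Q : dc Q.
Proof.
move=> d c Hc Hdc'.
have [Hd|Hd] := ltnP (ev d ord_max) l; first exact: Q_small.
have Hcl : (l <= ev c ord_max)%N.
  move: Hdc'; rewrite revlexE => /gtvP [i [H1 H2]].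
  have [e|ne] := eqVneq i ord_max.
    by move: H1; rewrite e => /ltnW; apply: leq_trans.
  rewrite -H2 //; move: (ltn_ord i) ne; rewrite -(inj_eq val_inj) /=; lia.
rewrite Q_big // in Hc; rewrite Q_big //; apply: (Hdc Hc).
rewrite revlexE -(@gtv_shift _ _ _ (ev d) (ev c) (dl l)) //.
  by move=> i; rewrite ev_ush // subnK // dl_le.
by move=> i; rewrite ev_ush // subnK // dl_le.
Qed.

Lemma card_notQ : #|[predC Q]| = #|[predC p]|.
Proof.
rewrite -[RHS](card_in_imset (f := @sh n m l)); last first.
  by move=> x y _ _ e; rewrite -(ushK l x) -(ushK l y) e.
apply: eq_card => c; rewrite !inE; apply/idP/imsetP.
  move=> Hc.
  have Hcl : (l <= ev c ord_max)%N by rewrite leqNgt; apply: contra Hc => /Q_small.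
  exists (ush c); last by rewrite shK.
  rewrite inE; change (~~ p (ush c)); change (is_true (~~ Q c)) in Hc; by rewrite -Q_big.
case=> b; rewrite inE => Hb ->.
change (~~ Q (sh l b)); change (is_true (~~ p b)) in Hb.
rewrite Q_big; first by rewrite ushK.
by rewrite ev_sh /dl eqxx leq_addl.
Qed.

End WithXn.

Lemma not_dc_Q : ~~ p (xn n m) -> (exists b, p b) -> (0 < l)%N -> ~ dc Q.
Proof.
move=> Hx [b Hb] Hl HQ.
have Hc := Q_sh_of Hb.
have Hd : Q (pure_mon (m + l) (xi n)).
  apply: (HQ _ _ Hc); rewrite revlexE; apply/gtvP; exists ord_max; split.
    by rewrite ev_pure max_neq_xi // ev_sh /dl eqxx addn_gt0 Hl orbT.
  by move=> j; rewrite ltnNge -ltnS ltn_ord.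
case/existsP: Hd => a /existsP [b' /andP [Hb' /forallP Hab]].
suff e : b' = xn n m by move: Hx; rewrite -e Hb'.
have Hle i : (ev b' i <= ev (pure_mon (m + l) (xi n)) i)%N.
  by rewrite -(eqP (Hab i)) leq_addl.
have H0 i : i != xi n -> ev b' i = 0%N.
  by move=> Hi; apply/eqP; rewrite -leqn0; move: (Hle i); rewrite ev_pure (negbTE Hi).
apply: ev_inj => i; rewrite ev_pure; case: eqP => [->|/eqP Hi]; last exact: H0.
have := ev_sum b'; rewrite (bigD1 (xi n)) //= big1 ?addn0 //.
Qed.

End Main.

Unset Implicit Arguments.

Theorem mainTheorem12 (k : closedFieldType) (Hchar : [pchar k] =i pred0)
  (n m : nat) (Hn : (1 <= n)%N) (Hm : (1 <= m)%N)
  (I : {vspace (homog k n m)}) (HI0 : I != 0%VS) (HIseg : initial_segment I) :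
  let xnm := xmon k (@pure_mon n m (inord n.-1)) in
  (* (1) *)
  ((forall l : nat, (0 < l)%N ->
      (initial_segment (SmulI l (m + l) I) <-> ('C(n + m - 1, m) <= \dim I)%N))
   /\ (('C(n + m - 1, m) <= \dim I)%N <-> xnm \in I))
  /\
  (* (2) *)
  (xnm \in I ->
     (forall l : nat,
        (\dim (fullv : {vspace (homog k n m)}) - \dim I
         = \dim (fullv : {vspace (homog k n (m + l))}) - \dim (SmulI l (m + l) I))%N)
     /\
     (forall J : forall t : nat, {vspace (homog k n t)},
        (* J is an ideal *)
        (forall (l t : nat) (f : homog k n l) (g : homog k n t),
            g \in J t -> mulh (l + t)%N f g \in J (l + t)%N) ->
        (* J is generated in degrees <= m *)
        (forall t : nat,
            J t = (\sum_(d < (minn t m).+1) SmulI (t - d) t (J d))%VS) ->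
        J m = I ->
        (* the Hilbert polynomial of S/J is constant *)
        exists c N : nat, forall t : nat, (N <= t)%N ->
          (\dim (fullv : {vspace (homog k n t)}) - \dim (J t))%N = c)).
Proof.
move=> xnm.
have [p [Hdc HI]] : exists p, dc p /\ I = Mp k p by apply/seg_iff.
have HdimI : \dim I = #|p| by rewrite HI dim_Mp.
have Hxnm : (xnm \in I) = p (xn n m) by rewrite HI xmon_Mp.
have HC : ('C(n + m - 1, m) <= \dim I)%N = p (xn n m) by rewrite HdimI -(dc_xn Hn).
have Hne : exists b, p b.
  case: (pickP p) => [b Hb|H0]; first by exists b.
  move: HI0; rewrite -dimv_eq0 HdimI => /eqP; case.
  by apply: eq_card0.
split; first split.
- move=> l Hl; rewrite HC HI SmulI_Mp; split.
  + move/seg_iff => [q [Hq Heq]].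
    case: (boolP (p (xn n m))) => // Hx; exfalso.
    apply: (not_dc_Q Hn Hx Hne Hl) => a b Hb Hab.
    rewrite (Mp_inj Heq); rewrite (Mp_inj Heq) in Hb; exact: (Hq _ _ Hb Hab).
  + move=> Hx; apply/seg_iff; exists (@Qp n l m (m + l) p); split => //.
    exact: (dc_Q Hn).
- by rewrite HC Hxnm.
move=> Hx; rewrite Hxnm in Hx.
have Hdim l : (\dim (fullv : {vspace (homog k n m)}) - \dim I =
   \dim (fullv : {vspace (homog k n (m + l))}) - \dim (SmulI l (m + l) I))%N.
  rewrite HI SmulI_Mp !dim_Mp !dim_full.
  rewrite -(cardC p) -(cardC (@Qp n l m (m + l) p)) !addKn.
  by rewrite (card_notQ l Hn).
split; first exact: Hdim.
move=> J HJid HJgen HJm.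
exists (\dim (fullv : {vspace (homog k n m)}) - \dim I)%N, m => t Ht.
have [l ->] : exists l, t = (m + l)%N by exists (t - m)%N; rewrite subnKC.
suff -> : J (m + l)%N = SmulI l (m + l) I by rewrite (Hdim l).
apply/eqP; rewrite eqEsubv; apply/andP; split.
  rewrite HJgen; apply/subv_sumP => d _; rewrite HI SmulI_Mp.
  have Hdm : (d <= m)%N.
    by move: (ltn_ord d); rewrite ltnS => /leq_trans; apply; rewrite geq_minr.
  apply/span_subvP => x /allpairsP [[f g] [_ Hg ->]] /=.
  have Hg' := vbasis_mem Hg.
  rewrite memMp; apply/forallP => c; apply/implyP => Hc; apply: contraNT Hc => Hne0.
  have [a [b [Hab Hgb]]] := mulh_supp Hne0.
  have Hsa : (m - d <= \sum_i ev a i)%N by rewrite ev_sum; lia.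
  have [h [Hh1 Hh2]] := split_le Hsa.
  have Hid := HJid (m - d)%N d (xmon k (mkmon (m - d) h)) g Hg'.
  rewrite subnK // HJm HI memMp in Hid.
  have Hsb : (\sum_i (h i + ev b i) = m)%N by rewrite big_split /= Hh2 ev_sum subnK.
  have Hb2 : p (mkmon m (fun i => h i + ev b i)%N).
    apply: contraT => Hb2; move/forallP: Hid => /(_ (mkmon m (fun i => h i + ev b i)%N)).
    rewrite Hb2 /= (@mulh_xmonl_eq _ _ _ _ _ _ _ _ b) ?(negbTE Hgb) //.
    by move=> i; rewrite !mkmonE.
  have Hsa2 : (\sum_i (ev a i - h i) = l)%N.
    rewrite sum_subn // ev_sum Hh2; lia.
  apply/existsP; exists (mkmon l (fun i => ev a i - h i)%N).
  apply/existsP; exists (mkmon m (fun i => h i + ev b i)%N); rewrite Hb2 /=.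
  apply/forallP => i; rewrite !mkmonE // addnA subnK //; exact/eqP/Hab.
rewrite HI SmulI_Mp; apply/span_subvP => x /mapP [c].
rewrite mem_filter => /andP [Hc _] ->.
case/existsP: Hc => a /existsP [b /andP [Hpb /forallP Hab]].
rewrite -(@mulh_xmon k n l m (m + l) a b c); last by move=> i; apply/eqP.
have := HJid l m (xmon k a) (xmon k b); rewrite HJm HI xmon_Mp => /(_ Hpb).
by rewrite [(l + m)%N]addnC.
Qed.
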